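(* Let $F\in\mathbb Z[T]$ with $F(0)\in\{-1,1\}$ and let $d\in\mathbb Z_{>0}$. Then there exists $M\in\mathcal D$ such that $F\equiv M\pmod{T^d}$ in $\mathbb Z[T]$.
   Context: $\Phi_n(T)\in\mathbb Z[T]$ denotes the $n$-th cyclotomic polynomial. A positive integer $n$ is of the special form if $n=pm$ where $p$ is prime and $m$ is a positive integer dividing $p-1$. $\mathcal D$ (the special root-of-unity polynomials) is the set of polynomials of the form $\pm\prod_{i}\Phi_{n_i}(T)$, a product of distinct cyclotomic polynomials in which every $n_i$ is of the special form. *)

(* Defs.v *)
From HB Require Import structures.
From mathcomp Require Import all_boot all_order all_algebra all_field.
Set Implicit Arguments. Unset Strict Implicit. Unset Printing Implicit Defensive.
Import Order.TTheory GRing.Theory Num.Theory.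
Local Open Scope ring_scope.

Definition special_form (n : nat) : Prop :=
  exists p m : nat, [/\ prime p, (0 < m)%N, (m %| p.-1)%N & n = (p * m)%N].

Definition in_D (M : {poly int}) : Prop :=
  exists (s : seq nat) (b : bool),
    [/\ uniq s, (forall n, n \in s -> special_form n)
      & M = (-1) ^+ b * \prod_(n <- s) 'Phi_n].

(* Main.v *)
Require Import Defs.
From HB Require Import structures.
From mathcomp Require Import all_boot all_order all_algebra all_field.
From mathcomp Require Import ring zify.
Import Order.TTheory GRing.Theory Num.Theory.
Local Open Scope ring_scope.



Definition cong (D : nat) (f g : {poly int}) := exists Q : {poly int}, f - g = Q * 'X^D.

Lemma cong_refl D f : cong D f f.
Proof. by exists 0; rewrite subrr mul0r. Qed.

Lemma cong_sym D f g : cong D f g -> cong D g f.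
Proof. by case=> Q HQ; exists (- Q); rewrite mulNr -HQ opprB. Qed.

Lemma cong_trans D f g h : cong D f g -> cong D g h -> cong D f h.
Proof.
by case=> Q1 H1 [Q2 H2]; exists (Q1 + Q2); rewrite mulrDl -H1 -H2 addrA subrK.
Qed.

Lemma cong_mul D f1 g1 f2 g2 : cong D f1 g1 -> cong D f2 g2 -> cong D (f1 * f2) (g1 * g2).
Proof.
case=> Q1 H1 [Q2 H2]; exists (Q1 * f2 + g1 * Q2).
have -> : f1 * f2 - g1 * g2 = (f1 - g1) * f2 + g1 * (f2 - g2) by ring.
by rewrite H1 H2; ring.
Qed.

Lemma cong_add D f1 g1 f2 g2 : cong D f1 g1 -> cong D f2 g2 -> cong D (f1 + f2) (g1 + g2).
Proof.
case=> Q1 H1 [Q2 H2]; exists (Q1 + Q2).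
have -> : f1 + f2 - (g1 + g2) = (f1 - g1) + (f2 - g2) by ring.
by rewrite H1 H2; ring.
Qed.

Lemma cong_le D D' f g : (D' <= D)%N -> cong D f g -> cong D' f g.
Proof.
move=> le [Q H]; exists (Q * 'X^(D - D')).
by rewrite H -mulrA -exprD subnK.
Qed.

Lemma cong_Xn D n : (D <= n)%N -> cong D ('X^n) 0.
Proof. by move=> le; exists ('X^(n - D)); rewrite subr0 -exprD subnK. Qed.

Lemma cong_mull D h f g : cong D f g -> cong D (h * f) (h * g).
Proof. by move=> H; apply: cong_mul => //; apply: cong_refl. Qed.

Lemma cong_sign_prod D (I : eqType) (s : seq I) (G : I -> {poly int}) :
  (forall i, i \in s -> exists e : nat, cong D (G i) ((-1) ^+ e)) ->
  exists e : nat, cong D (\prod_(i <- s) G i) ((-1) ^+ e).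
Proof.
elim: s => [|i s IH] H; first by exists 0%N; rewrite big_nil expr0; apply: cong_refl.
have [e1 H1] := H i (mem_head _ _).
have [e2 H2] := IH (fun j hj => H j (mem_behead (s := i :: s) hj)).
by exists (e1 + e2)%N; rewrite big_cons exprD; apply: cong_mul.
Qed.

Arguments cong_sym {D f g}.
Arguments cong_trans {D f g h}.
Arguments cong_mul {D f1 g1 f2 g2}.
Arguments cong_add {D f1 g1 f2 g2}.
Arguments cong_mull {D} h {f g}.

Lemma divisors_pmul p k : prime p -> ~~ (p %| k)%N -> (0 < k)%N ->
  perm_eq (divisors (p * k)) (divisors k ++ map (muln p) (divisors k)).
Proof.
move=> pp npk k0; have p0 := prime_gt0 pp.
have pk0 : (0 < p * k)%N by rewrite muln_gt0 p0.
apply: uniq_perm; first exact: divisors_uniq.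
  have inj : injective (muln p) by move=> a b h; apply/eqP; rewrite -(eqn_pmul2l p0) h.
  rewrite cat_uniq divisors_uniq (map_inj_uniq inj) ?divisors_uniq ?andbT /=.
  apply/hasPn => x /mapP [d hd ->] /=.
  rewrite -dvdn_divisors //.
  by apply: contra npk; apply: dvdn_trans; apply: dvdn_mulr.
move=> x; rewrite mem_cat -(dvdn_divisors _ pk0) -(dvdn_divisors _ k0); apply/idP/idP.
  case: (boolP (p %| x)%N) => [/dvdnP [y ->] | npx].
    rewrite [(y * p)%N]mulnC (dvdn_pmul2l p0) => hy; apply/orP; right.
    by apply: map_f; rewrite -(dvdn_divisors _ k0).
  move=> hx; apply/orP; left.
  have cx : coprime x p by rewrite coprime_sym prime_coprime.
  by rewrite -(Gauss_dvdl _ cx) mulnC.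
case/orP => [h | /mapP [d hd ->]].
  by rewrite dvdn_mull.
by rewrite dvdn_pmul2l // (dvdn_divisors _ k0).
Qed.

Lemma sign_sq (e : nat) : (-1) ^+ e * (-1) ^+ e = 1 :> {poly int}.
Proof. by rewrite -exprD addnn -mul2n exprM sqrrN expr1n expr1n. Qed.

Lemma keyinv D p k : prime p -> (D <= p)%N -> (k < p)%N -> (0 < k)%N ->
  exists e : nat, cong D ('Phi_k * 'Phi_(p * k)) ((-1) ^+ e).
Proof.
move=> pp Dp; elim/ltn_ind: k => k IH kp k0.
have npk : ~~ (p %| k)%N by rewrite gtnNdvd.
have p0 := prime_gt0 pp.
have pk0 : (0 < p * k)%N by rewrite muln_gt0 p0.
have E : \prod_(d <- divisors k) ('Phi_d * 'Phi_(p * d)) = 'X^(p * k) - 1.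
  rewrite big_split /= -(big_map (muln p) predT (fun d => 'Phi_d)) -big_cat /=.
  by rewrite -(perm_big _ (@divisors_pmul p k pp npk k0)) prod_Cyclotomic.
have C1 : cong D ('X^(p * k) - 1) (-1).
  exists ('X^(p * k - D)); rewrite opprK subrK -exprD subnK //.
  by apply: (leq_trans Dp); rewrite leq_pmulr.
rewrite (big_rem k) /= in E; last by rewrite -dvdn_divisors.
have Hs : forall d, d \in rem k (divisors k) ->
    exists e : nat, cong D ('Phi_d * 'Phi_(p * d)) ((-1) ^+ e).
  move=> d; rewrite mem_rem_uniq ?divisors_uniq // inE => /andP [ndk dk].
  rewrite -dvdn_divisors // in dk.
  have d0 : (0 < d)%N by apply: dvdn_gt0 dk.
  have dk' : (d < k)%N by rewrite ltn_neqAle ndk dvdn_leq.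
  exact: IH dk' (ltn_trans dk' kp) d0.
have [e' He'] := @cong_sign_prod D _ _ (fun d => 'Phi_d * 'Phi_(p * d)) Hs.
exists e'.+1.
have h1 : cong D (('Phi_k * 'Phi_(p * k)) * (-1) ^+ e') (-1).
  apply: (cong_trans (cong_mull ('Phi_k * 'Phi_(p * k)) (cong_sym He'))).
  by rewrite E.
have := cong_mul h1 (cong_refl D ((-1) ^+ e')).
by rewrite -[_ * (-1) ^+ e' * (-1) ^+ e']mulrA sign_sq mulr1 exprS.
Qed.



Lemma Phi0_unit m : (0 < m)%N -> ('Phi_m)`_0 \is a GRing.unit.
Proof.
move=> m0; have E := prod_Cyclotomic m0.
rewrite (big_rem m) ?divisors_id // in E.
have := congr1 (fun p : {poly int} => p`_0) E.
rewrite /= coef0M coefB coefXn coef1 eqxx eq_sym (negbTE (lt0n_neq0 m0)) sub0r => h.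
apply/unitrP; exists (- (\prod_(y <- rem m (divisors m)) 'Phi_y)`_0).
by split; rewrite ?mulNr ?mulrN ?[_ * 'Phi_m`_0]mulrC h opprK.
Qed.

Lemma Phi_eval_big m N : (0 < m)%N -> (3 <= N)%N -> 2 <= `|('Phi_m).[N%:R]|.
Proof.
move=> m0 N3; have [z pz] := C_prim_root_exists m0.
rewrite -(ler_int algC) intr_norm.
have -> : (('Phi_m).[N%:R])%:~R = (map_poly intr 'Phi_m : {poly algC}).[N%:R].
  by rewrite -[X in _ = _.[X]](rmorph_nat (intr : int -> algC)) horner_map.
rewrite (Cintr_Cyclotomic pz) /cyclotomic horner_prod normr_prod.
have nz : `|z| = 1.
  apply/eqP; rewrite -(pexpr_eq1 m0) // -normrX (prim_expr_order pz) normr1.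
  exact: eqxx.
have F2 : forall k : 'I_m, 2 <= `|('X - (z ^+ k)%:P).[N%:R]|.
  move=> k; rewrite hornerXsubC.
  apply: le_trans (lerB_normD _ _); rewrite normrN normrX nz expr1n normr_nat.
  rewrite lerBrDr; apply: le_trans (_ : 3%:R <= N%:R); first by rewrite addrC -mulrS.
  by rewrite ler_nat.
pose i0 : 'I_m := Ordinal (ltn_pmod 1 m0).
have ci0 : coprime i0 m by rewrite /= coprime_modl coprime1n.
rewrite (bigD1 i0) //=.
rewrite -[2%:~R]mulr1.
have h12 : (1 : algC) <= 2 by rewrite ler1n.
have Fp : forall k : 'I_m, (0 <= 1 :> algC) && (1 <= `|('X - (z ^+ k)%:P).[N%:R]|).
  move=> k; apply/andP; split; first exact: ler01.
  exact: le_trans h12 (F2 k).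
apply: ler_pM.
- by [].
- by [].
- exact: (F2 i0).
have := @ler_prod _ _ (index_enum 'I_m) (fun i => coprime i m && (i != i0)) _ _ (fun k _ => Fp k).
by rewrite big1_eq.
Qed.

Lemma intr_Fp0 q (v : int) : prime q -> (q %| `|v|)%N -> (v%:~R : 'F_q) = 0.
Proof.
move=> pq; case: v => n /= h.
  by apply/eqP; rewrite -(dvdn_pcharf (pchar_Fp pq)).
rewrite NegzE mulrNz; apply/eqP; rewrite oppr_eq0.
by rewrite -(dvdn_pcharf (pchar_Fp pq)).
Qed.

Lemma dirichlet1 m B : (0 < m)%N -> exists p, [/\ prime p, (B < p)%N & (m %| p.-1)%N].
Proof.
move=> m0.
pose N := (m + B + 3)`!.
have N3 : (3 <= N)%N by apply: leq_trans (fact_geq _); rewrite leq_addl.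
pose v : int := ('Phi_m).[N%:R].
have v2 : (1 < `|v|)%N by rewrite -(ltz_nat) abszE; apply: Phi_eval_big.
pose q := pdiv `|v|%N.
have pq : prime q by apply: pdiv_prime.
have qv : (q %| `|v|)%N by apply: pdiv_dvd.
pose f := map_poly (intr : int -> 'F_q) 'Phi_m.
pose x : 'F_q := N%:R.
have fx : f.[x] = 0.
  rewrite /x -[N%:R](rmorph_nat (intr : int -> 'F_q)) horner_map /=.
  exact: intr_Fp0.
have qdN : forall k, (0 < k <= m + B + 3)%N -> (q %| k)%N -> x = 0.
  move=> k hk qk; apply/eqP; rewrite -(dvdn_pcharf (pchar_Fp pq)).
  exact: dvdn_trans qk (dvdn_fact hk).
have xnz : x != 0.
  apply/eqP => x0; move: fx; rewrite x0 horner_coef0 coef_map /=.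
  apply/eqP; rewrite -unitfE.
  by apply: rmorph_unit; apply: Phi0_unit.
have q0 := prime_gt0 pq.
have qB : (B < q)%N.
  rewrite ltnNge; apply/negP => qB; case/eqP: xnz.
  by apply: (qdN q) => //; apply/andP; split => //; lia.
have mF : (m%:R : 'F_q) != 0.
  apply/negP => /eqP m0F; case/eqP: xnz; apply: (qdN m).
    by apply/andP; split => //; lia.
  by rewrite (dvdn_pcharf (pchar_Fp pq)) m0F.
have mapX : forall n, map_poly (intr : int -> 'F_q) ('X^n - 1) = 'X^n - 1.
  by move=> n; rewrite rmorphB /= rmorph1 map_polyXn.
have Em := prod_Cyclotomic m0.
have xm : x ^+ m = 1.
  have := congr1 (fun p => (map_poly (intr : int -> 'F_q) p).[x]) Em.
  rewrite /= mapX (big_rem m) ?divisors_id // rmorphM hornerM fx mul0r !hornerE.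
  by move/esym/eqP; rewrite subr_eq0 => /eqP.
have [o po om] := prim_order_exists m0 xm.
have xq : x ^+ q.-1 = 1.
  have := expf_card x; rewrite card_Fp // => h.
  have h' : x ^+ q.-1 * x = 1 * x by rewrite -exprSr prednK // mul1r.
  exact: (mulIf xnz).
suff -> : m = o by exists q; split => //; rewrite (prim_order_dvd po) xq.
apply/eqP; apply/negP => /negP mo.
have o0 := prim_order_gt0 po.
have om' : (o < m)%N by rewrite ltn_neqAle eq_sym mo dvdn_leq.
have xo : x ^+ o = 1 := prim_expr_order po.
have Eo := prod_Cyclotomic o0.
have : (map_poly (intr : int -> 'F_q) (\prod_(d <- divisors o) 'Phi_d)).[x] == 0.
  by rewrite Eo mapX !hornerE xo subrr.
rewrite rmorph_prod horner_prod prodf_seq_eq0 => /hasP [d hd /= hdx].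
have dvo : (d %| o)%N by rewrite (dvdn_divisors _ o0).
have dm : (d %| m)%N := dvdn_trans dvo om.
have dnm : d != m.
  by rewrite neq_ltn (leq_ltn_trans (dvdn_leq o0 dvo) om').
have hdm : d \in rem m (divisors m).
  by rewrite mem_rem_uniq ?divisors_uniq // inE dnm -dvdn_divisors.
have sep := separable_Xn_sub_1 mF.
rewrite -mapX -Em (big_rem m) ?divisors_id // (big_rem d hdm) /= !rmorphM in sep.
move: sep; rewrite separable_mul => /and3P [_ _ cop].
have rf : root f x by rewrite /root fx.
have := coprimep_root cop rf.
by rewrite hornerM (eqP hdx) mul0r eqxx.
Qed.



Definition freshD (B : nat) (M : {poly int}) := exists (s : seq nat) (e : nat),
  [/\ uniq s, (forall n, n \in s -> special_form n /\ (B < n)%N)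
    & M = (-1) ^+ e * \prod_(n <- s) 'Phi_n].

Lemma freshD_inD B M : freshD B M -> in_D M.
Proof.
case=> s [e [us hs ->]]; exists s, (odd e); split => //; last by rewrite signr_odd.
by move=> n /hs [].
Qed.

Lemma freshD_sign B e M : freshD B M -> freshD B ((-1) ^+ e * M).
Proof.
case=> s [e' [us hs ->]]; exists s, (e + e')%N; split => //.
by rewrite mulrA -exprD.
Qed.

Lemma freshD_one B : freshD B 1.
Proof. by exists [::], 0%N; split => //; rewrite big_nil mulr1. Qed.

Lemma sumn_ge (s : seq nat) x : x \in s -> (x <= sumn s)%N.
Proof.
elim: s => [|y s IH] //=; rewrite inE => /orP [/eqP -> | /IH h].
  exact: leq_addr.
exact: leq_trans h (leq_addl _ _).
Qed.

Lemma freshD_mul B M1 : freshD B M1 ->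
  exists B', forall M2, freshD B' M2 -> freshD B (M1 * M2).
Proof.
case=> s1 [e1 [u1 h1 ->]]; exists (B + sumn s1)%N => M2 [s2 [e2 [u2 h2 ->]]].
exists (s1 ++ s2), (e1 + e2)%N; split.
- rewrite cat_uniq u1 u2 /= andbT; apply/hasPn => n /h2 [_ hn].
  by apply/negP => /sumn_ge; lia.
- move=> n; rewrite mem_cat => /orP [/h1 // | /h2 [sp hn]]; split => //; lia.
- by rewrite big_cat exprD /=; ring.
Qed.

Arguments freshD_mul {B M1}.
Arguments freshD_sign {B} e {M}.

Definition approx D G := forall B, exists M, freshD B M /\ cong D G M.
Definition invapprox D G :=
  forall B, exists M (e : nat), freshD B M /\ cong D (M * G) ((-1) ^+ e).

Lemma approx_one D : approx D 1.
Proof. by move=> B; exists 1; split; [apply: freshD_one | apply: cong_refl]. Qed.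

Lemma approx_mul D G1 G2 : approx D G1 -> approx D G2 -> approx D (G1 * G2).
Proof.
move=> h1 h2 B; have [M1 [f1 c1]] := h1 B; have [B' hB'] := freshD_mul f1.
have [M2 [f2 c2]] := h2 B'; exists (M1 * M2); split; first exact: hB'.
exact: cong_mul.
Qed.

Lemma approx_sign D e G : approx D G -> approx D ((-1) ^+ e * G).
Proof.
move=> h B; have [M [f c]] := h B; exists ((-1) ^+ e * M); split.
  exact: freshD_sign.
exact: cong_mull.
Qed.

Lemma approx_cong D G G' : cong D G G' -> approx D G' -> approx D G.
Proof.
move=> c h B; have [M [f c']] := h B; exists M; split => //.
exact: cong_trans c c'.
Qed.

Lemma approx_le D D' G : (D' <= D)%N -> approx D G -> approx D' G.
Proof.
move=> le h B; have [M [f c]] := h B; exists M; split => //.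
exact: (@cong_le _ _ _ _ le c).
Qed.

Lemma approx_prod D (s : seq nat) (F : nat -> {poly int}) :
  (forall i, i \in s -> approx D (F i)) -> approx D (\prod_(i <- s) F i).
Proof.
elim: s => [|i s IH] H; first by rewrite big_nil; apply: approx_one.
rewrite big_cons; apply: approx_mul; first exact: H (mem_head _ _).
by apply: IH => j hj; apply: H; rewrite inE hj orbT.
Qed.

Lemma approx_exp D G n : approx D G -> approx D (G ^+ n).
Proof.
move=> h; elim: n => [|n IH]; first by rewrite expr0; apply: approx_one.
by rewrite exprS; apply: approx_mul.
Qed.

Lemma invapprox_one D : invapprox D 1.
Proof.
by move=> B; exists 1, 0%N; split; [apply: freshD_one | rewrite mulr1 expr0; apply: cong_refl].
Qed.

Lemma invapprox_mul D G1 G2 : invapprox D G1 -> invapprox D G2 -> invapprox D (G1 * G2).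
Proof.
move=> h1 h2 B; have [M1 [e1 [f1 c1]]] := h1 B; have [B' hB'] := freshD_mul f1.
have [M2 [e2 [f2 c2]]] := h2 B'; exists (M1 * M2), (e1 + e2)%N; split; first exact: hB'.
have -> : M1 * M2 * (G1 * G2) = (M1 * G1) * (M2 * G2) by ring.
by rewrite exprD; apply: cong_mul.
Qed.

Lemma invapprox_prod D (s : seq nat) (F : nat -> {poly int}) :
  (forall i, i \in s -> invapprox D (F i)) -> invapprox D (\prod_(i <- s) F i).
Proof.
elim: s => [|i s IH] H; first by rewrite big_nil; apply: invapprox_one.
rewrite big_cons; apply: invapprox_mul; first exact: H (mem_head _ _).
by apply: IH => j hj; apply: H; rewrite inE hj orbT.
Qed.

Lemma invapprox_Phi D k : (0 < k)%N -> invapprox D 'Phi_k.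
Proof.
move=> k0 B; have [p [pp hp kp]] := dirichlet1 k (B + D + k) k0.
have [e he] := @keyinv D p k pp ltac:(lia) ltac:(lia) k0.
exists ('Phi_(p * k)), e; split; last by rewrite mulrC.
exists [:: (p * k)%N], 0%N; split => //; last by rewrite big_seq1 expr0 mul1r.
move=> n; rewrite inE => /eqP ->; split; first by exists p, k; split.
nia.
Qed.

Lemma approx_Phi D k : (0 < k)%N -> approx D 'Phi_k.
Proof.
move=> k0 B; have [p [pp hp kp]] := dirichlet1 k (D + k) k0.
have [e1 h1] := @keyinv D p k pp ltac:(lia) ltac:(lia) k0.
have pk0 : (0 < p * k)%N by rewrite muln_gt0 prime_gt0.
have [M [e2 [fM h2]]] := @invapprox_Phi D _ pk0 B.
exists ((-1) ^+ (e1 + e2) * M); split; first exact: freshD_sign.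
have c : cong D ((-1) ^+ e2 * 'Phi_k) (M * (-1) ^+ e1).
  apply: cong_trans (cong_mul (cong_sym h2) (cong_refl D 'Phi_k)) _.
  rewrite -mulrA [_ * 'Phi_k]mulrC.
  exact (cong_mull M h1).
have := cong_mull ((-1) ^+ e2) c; rewrite mulrA sign_sq mul1r => c'.
apply: cong_trans c' _.
have -> : (-1) ^+ e2 * (M * (-1) ^+ e1) = (-1) ^+ (e1 + e2) * M by rewrite exprD; ring.
exact: cong_refl.
Qed.

Lemma dvd_divisors_gt0 n i : (0 < n)%N -> i \in divisors n -> (0 < i)%N.
Proof. by move=> n0; rewrite -dvdn_divisors // => /dvdn_gt0; apply. Qed.

Lemma approx_Xn1 D d : (0 < d)%N -> approx D ('X^d - 1).
Proof.
move=> d0; rewrite -prod_Cyclotomic //; apply: approx_prod => i hi.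
by apply: approx_Phi; apply: dvd_divisors_gt0 hi.
Qed.

Lemma invapprox_Xn1 D d : (0 < d)%N -> invapprox D ('X^d - 1).
Proof.
move=> d0; rewrite -prod_Cyclotomic //; apply: invapprox_prod => i hi.
by apply: invapprox_Phi; apply: dvd_divisors_gt0 hi.
Qed.

Lemma approx_1pX d : (0 < d)%N -> approx d.+1 (1 + 'X^d).
Proof.
move=> d0 B; have [M [e [fM h]]] := @invapprox_Xn1 d.+1 d d0 B.
exists ((-1) ^+ e.+1 * M); split; first exact: freshD_sign.
have c1 := cong_mul h (cong_refl d.+1 ('X^d + 1)).
have c2 : cong d.+1 (M * ('X^d - 1) * ('X^d + 1)) (- M).
  exists (M * 'X^(d.-1)).
  have -> : M * ('X^d - 1) * ('X^d + 1) - - M = M * 'X^(d + d) by rewrite exprD; ring.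
  by rewrite -mulrA -exprD; congr (_ * 'X^_); lia.
have c3 := cong_mull ((-1) ^+ e) (cong_trans (cong_sym c2) c1).
rewrite mulrA sign_sq mul1r in c3.
have -> : (-1) ^+ e.+1 * M = (-1) ^+ e * - M by rewrite exprS; ring.
have -> : 1 + 'X^d = 'X^d + 1 :> {poly int} by rewrite addrC.
exact: (cong_sym c3).
Qed.


Lemma pow_lin d (u : int) n : (0 < d)%N ->
  cong d.+1 ((1 + u%:P * 'X^d) ^+ n) (1 + (u *+ n)%:P * 'X^d).
Proof.
move=> d0; elim: n => [|n IH].
  by rewrite expr0 mulr0n polyC0 mul0r addr0; apply: cong_refl.
rewrite exprS.
apply: (cong_trans (cong_mull (1 + u%:P * 'X^d) IH)).
exists ((u * (u *+ n))%:P * 'X^(d.-1)).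
rewrite mulrS polyCD polyCM.
have e1 : 'X^(d.+1) = 'X^(d.-1) * 'X * 'X :> {poly int}.
  by rewrite -!exprSr prednK.
have e2 : 'X^d = 'X^(d.-1) * 'X :> {poly int} by rewrite -exprSr prednK.
rewrite e1 e2.
ring.
Qed.

Lemma approx_lin d (c : int) : (0 < d)%N -> approx d.+1 (1 + c%:P * 'X^d).
Proof.
move=> d0; case: c => n.
  rewrite -[Posz n]natz.
  apply: (approx_cong _ _ _ (cong_sym (pow_lin d 1 n d0))).
  rewrite polyC1 mul1r; apply: approx_exp; exact: approx_1pX.
rewrite NegzE -natz -mulNrn.
apply: (approx_cong _ _ _ (cong_sym (pow_lin d (-1) n.+1 d0))).
have -> : 1 + (-1)%:P * 'X^d = (-1) ^+ 1 * ('X^d - 1) :> {poly int}.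
  by rewrite polyCN polyC1 expr1; ring.
by apply: approx_exp; apply: approx_sign; apply: approx_Xn1.
Qed.

Lemma decomp0 (p : {poly int}) : p = (p`_0)%:P + drop_poly 1 p * 'X.
Proof.
rewrite -{1}(poly_take_drop 1 p) expr1; congr (_ + _).
by apply/polyP => i; rewrite coef_take_poly coefC; case: i.
Qed.

Lemma main_approx d (F : {poly int}) : (F`_0 = 1 \/ F`_0 = -1) -> approx d.+1 F.
Proof.
elim: d F => [|d IH] F hF.
  move=> B; exists ((F`_0)%:P); split.
    case: hF => ->; first by rewrite polyC1; apply: freshD_one.
    have -> : (-1)%:P = (-1) ^+ 1 * 1 :> {poly int} by rewrite polyCN polyC1 expr1 mulr1.
    apply: freshD_sign; exact: freshD_one.
  exists (drop_poly 1 F); rewrite {1}(decomp0 F) expr1; ring.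
move=> B; have [M1 [f1 [Q c1]]] := IH F hF B.
have [B' hB'] := freshD_mul f1.
set eps := F`_0.
have ee : eps%:P * eps%:P = 1 :> {poly int}.
  by rewrite -polyCM /eps; case: hF => ->; rewrite ?mulr1 ?mulrNN ?mulr1 polyC1.
have M10 : M1`_0 = eps.
  have := congr1 (fun p : {poly int} => p`_0) c1; rewrite /= coefMXn /= coefB.
  by move/eqP; rewrite subr_eq0 => /eqP.
set a := Q`_0.
have [M2 [f2 c2]] := @approx_lin d.+1 (eps * a) isT B'.
exists (M1 * M2); split; first exact: hB'.
apply: (cong_trans _ (cong_mull M1 c2)).
exists (drop_poly 1 Q - (eps * a)%:P * drop_poly 1 M1).
have EF : F = M1 + Q * 'X^(d.+1) by rewrite -c1; ring.
have dM : M1 = eps%:P + drop_poly 1 M1 * 'X by rewrite -M10; apply: decomp0.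
have dQ : Q = a%:P + drop_poly 1 Q * 'X by apply: decomp0.
rewrite EF; set M1' := drop_poly 1 M1; set Q' := drop_poly 1 Q.
rewrite dM dQ !polyCM.
rewrite (exprS _ d.+1).
set X1 := 'X^(d.+1).
apply/eqP; rewrite -subr_eq0; apply/eqP.
transitivity ((1 - eps%:P * eps%:P) * a%:P * X1); first by ring.
by rewrite ee subrr !mul0r.
Qed.

Theorem proposition7p3 (F : {poly int}) (d : nat) :
  (F`_0 = 1 \/ F`_0 = -1) -> (0 < d)%N ->
  exists M : {poly int}, in_D M /\ exists Q : {poly int}, F - M = Q * 'X^d.
Proof.
move=> hF; case: d => // d _.
have [M [fM [Q hQ]]] := main_approx d F hF 0.
by exists M; split; [exact: freshD_inD fM | exists Q].
Qed.
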